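(* For $n \ge 4$ with $n \equiv 4 \pmod 6$, if $G \cong P_n$ and $v$ is an arbitrary vertex of $G$, then $\gamma_{\rm tg}(G|v) \le \gamma_{\rm tg}(G) - 1$.
   Context: Total domination game on a graph without isolated vertices: Dominator and Staller alternately choose vertices, each chosen vertex must be adjacent to some vertex not yet totally dominated; the game ends when no legal move exists; Dominator minimizes, Staller maximizes the number of moves; $\gamma_{\rm tg}(G)$ is the number of moves in the Dominator-start game under optimal play. $G|v$ is $G$ with $v$ declared already totally dominated, and $\gamma_{\rm tg}(G|v)$ is the corresponding optimal number of moves in the Dominator-start game. *)

(* Defs.v *)
From mathcomp Require Import all_boot.
Set Implicit Arguments. Unset Strict Implicit. Unset Printing Implicit Defensive.

Section TotalDominationGame.
Variables (T : finType) (e : rel T).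

Definition nbhd (x : T) : {set T} := [set y | e x y].

(* D = set of vertices already totally dominated.  A vertex x is a legal
   move iff it is adjacent to some vertex not yet totally dominated. *)
Definition legal_move (D : {set T}) (x : T) : bool := ~~ (nbhd x \subset D).

(* Optimal number of remaining moves from state D, when it is Dominator's
   turn (dom = true) or Staller's turn (dom = false).  The fuel k bounds the
   number of moves; every legal move enlarges D strictly, so fuel #|T| is
   always sufficient.  The identity #|T| of minn is never reached as a value
   because the min is only taken over a nonempty set of moves whose values
   are at most #|T| - 1. *)
Fixpoint tg_value (k : nat) (D : {set T}) (dom : bool) : nat :=
  match k with
  | 0 => 0
  | k'.+1 =>
      if [exists x, legal_move D x] then
        (if dom then
           \big[minn/#|T|]_(x | legal_move D x) tg_value k' (D :|: nbhd x) false
         else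
           \max_(x | legal_move D x) tg_value k' (D :|: nbhd x) true).+1
      else 0
  end.

Definition gamma_tg : nat := tg_value #|T| set0 true.

(* gamma_tg(G|v): Dominator-start game with v declared already totally dominated *)
Definition gamma_tg_at (v : T) : nat := tg_value #|T| [set v] true.

End TotalDominationGame.

Definition path_rel (n : nat) : rel 'I_n :=
  fun i j => (i.+1 == j :> nat) || (j.+1 == i :> nat).
Arguments path_rel n : clear implicits.

(* Main.v *)
Require Import Defs.
From mathcomp Require Import all_boot zify.
Set Implicit Arguments. Unset Strict Implicit. Unset Printing Implicit Defensive.

Notation w L := ((2 * L) %/ 3).

Fixpoint G (s : seq bool) (r : nat) : nat :=
  match s with
  | [::] => w r
  | b :: s' => if b then G s' r.+1 else w r + G s' 0
  end.
Definition F s := G s 0.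
Fixpoint lead (s : seq bool) : nat :=
  match s with b :: s' => if b then (lead s').+1 else 0 | [::] => 0 end.

Lemma Gshift s q : G s q + w (lead s) = G s 0 + w (q + lead s).
Proof.
elim: s q => [|b s IH] q /=; first by rewrite addn0; lia.
case: b => /=; last by lia.
have h1 := IH q.+1; have h2 := IH 1; lia.
Qed.

Lemma G_le s r : G s r <= r + count id s.
Proof. elim: s r => [|b s IH] r /=; first lia. case: b => /=; have := IH r.+1; have := IH 0; lia. Qed.

Definition clrh (s : seq bool) := match s with [::] => [::] | _ :: s' => false :: s' end.
Fixpoint clr (s : seq bool) c :=
  match s with
  | [::] => [::]
  | b :: s' => match c with 0 => false :: clrh s' | c'.+1 => b :: clr s' c' end
  end.

Lemma count_clrh s : count id s = count id (clrh s) + nth false s 0.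
Proof. case: s => [|b s] //=; case: b => /=; lia. Qed.

Lemma count_clr s c : count id s = count id (clr s c) + nth false s c + nth false s c.+1.
Proof.
elim: s c => [|b s IH] [|c] //=.
  case: s {IH} => [|b2 s] /=; case: b => /=; try lia; case: b2 => /=; lia.
have := IH c; case: b => /=; lia.
Qed.

Lemma S1 s c r : count id (clr s c) < count id s ->
  G s r + 1 <= G (clr s c) r + 2 * (count id s - count id (clr s c)).
Proof.
elim: s c r => [|b s IH] [|c] r //=.
  case: s {IH} => [|b2 s] /=.
    by case: b => //= _; lia.
  have h1 := Gshift s r.+2; have h2 := Gshift s 1; have h3 := Gshift s r.+1.
  have h4 := Gshift s 0.
  case: b; case: b2 => /=; lia.
case: b => /= H.
  have := IH c r.+1; lia.
have := IH c 0; lia.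
Qed.

Lemma S2 s : count id (clrh s) < count id s -> G s 0 + 1 <= G (clrh s) 0 + 2.
Proof.
case: s => [|b s] //=; case: b => /= H; last lia.
have := Gshift s 1; lia.
Qed.

Lemma G_nseq a l r : G (nseq a true ++ l) r = G l (r + a).
Proof. elim: a r => [|a IH] r /=; first by rewrite addn0. by rewrite IH addSnnS. Qed.

Lemma clr_cat l1 l2 c : clr (l1 ++ l2) (size l1 + c) = l1 ++ clr l2 c.
Proof. by elim: l1 => [|b l1 IH] //=; rewrite IH. Qed.

Lemma nseqS_cat a (l : seq bool) : nseq a true ++ true :: l = nseq a.+1 true ++ l.
Proof. by elim: a => //= a ->. Qed.

Lemma DomL_gen s a : 0 < F (nseq a true ++ s) ->
  exists c, [/\ c.+1 < size (nseq a true ++ s), nth false (nseq a true ++ s) c,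
     nth false (nseq a true ++ s) c.+1 &
     F (nseq a true ++ s) + F (nseq a true ++ s) %% 2 <= F (clr (nseq a true ++ s) c) + 2].
Proof.
elim: s a => [|b s IH] a.
  rewrite cats0 /F -[nseq a true]cats0 G_nseq /= => H.
  have Ha : 2 <= a by lia.
  exists (a - 2).
  have -> : nseq a true = nseq (a - 2) true ++ [:: true; true] by rewrite -[[:: true; true]]/(nseq 2 true) -nseqD; congr nseq; lia.
  rewrite cats0 size_cat size_nseq /= !nth_cat size_nseq ltnn.
  have -> : (a - 2).+1 < a - 2 = false by lia.
  have -> : (a-2).+1 - (a-2) = 1 by lia.
  rewrite subnn; have := clr_cat (nseq (a - 2) true) [:: true; true] 0.
  rewrite size_nseq addn0 => -> /=; rewrite !G_nseq /=.
  split => //; try lia.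
case: b.
  rewrite nseqS_cat; exact: IH.
rewrite /F G_nseq /= => H.
case Hc: ((2 <= a) && ((w a) %% 2 == 1) || (2 <= a) && (G s 0 %% 2 == 0)).
  exists (a - 2).
  have -> : nseq a true = nseq (a - 2) true ++ [:: true; true] by rewrite -[[:: true; true]]/(nseq 2 true) -nseqD; congr nseq; lia.
  rewrite -catA size_cat size_nseq /= !nth_cat size_nseq ltnn.
  have -> : (a - 2).+1 < a - 2 = false by lia.
  have -> : (a-2).+1 - (a-2) = 1 by lia.
  rewrite subnn; have := clr_cat (nseq (a - 2) true) [:: true, true, false & s] 0.
  rewrite size_nseq addn0 => -> /=; rewrite !G_nseq /=.
  split => //; try lia.
have H' : 0 < F (nseq 0 true ++ s) by rewrite /F /=; lia.
have [c [Hc1 Hc2 Hc3 Hc4]] := IH 0 H'.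
rewrite /= in Hc1 Hc2 Hc3 Hc4.
exists (a + c.+1).
rewrite size_cat size_nseq /= !nth_cat size_nseq.
have -> : a + c.+1 < a = false by lia.
have -> : (a + c.+1).+1 < a = false by lia.
have -> : a + c.+1 - a = c.+1 by lia.
have -> : (a + c.+1).+1 - a = c.+2 by lia.
rewrite /=.
have := clr_cat (nseq a true) (false :: s) c.+1.
rewrite size_nseq => -> /=; rewrite G_nseq /=.
split => //; try lia.
move: Hc4; rewrite /F; lia.
Qed.

Lemma DomL s : 0 < F s ->
  exists c, [/\ c.+1 < size s, nth false s c, nth false s c.+1 &
     F s + F s %% 2 <= F (clr s c) + 2].
Proof. move=> H; have [c Hc] := DomL_gen (s:=s) (a:=0) H; by exists c. Qed.

Lemma SE s : 0 < count id s -> exists c, c < size s /\ count id (clr s c) + 1 = count id s.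
Proof.
elim: s => [|b s IH] //= H.
case Hs: (0 < count id s).
  have [c [H1 H2]] := IH Hs. exists c.+1 => /=; split; first lia. rewrite -H2; lia.
exists 0; split => //.
have := count_clrh s. case: b H => /=; lia.
Qed.

Lemma SO s : 0 < count id s ->
  count id (clrh s) + 1 = count id s \/
  exists c, c.+1 < size s /\ count id (clr s c) + 1 = count id s.
Proof.
elim: s => [|b s IH] //=.
case: b => /= H; first by left; lia.
rewrite add0n in H.
have [H1|[c [H1 H2]]] := IH H.
  right; exists 0 => /=. split; last by lia.
  case: s H {IH H1} => //=.
right; exists c.+1 => /=; split; lia.
Qed.

Lemma mkseqS' (T : Type) (f : nat -> T) m : mkseq f m.+1 = f 0 :: mkseq (fun j => f j.+1) m.
Proof. rewrite /mkseq /=; congr cons; have -> : iota 1 m = [seq 1 + i | i <- iota 0 m] by rewrite -iotaDl. by rewrite -map_comp. Qed.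

Lemma eq_in_mkseq (T : Type) (f g : nat -> T) m :
  (forall j, j < m -> f j = g j) -> mkseq f m = mkseq g m.
Proof. move=> H; apply/eq_in_map => j; rewrite mem_iota => /andP[_ Hj]; exact: H. Qed.

Lemma mask_clr f m c :
  mkseq (fun j => f j && ~~ ((j == c) || (j == c.+1))) m = clr (mkseq f m) c.
Proof.
elim: m f c => [|m IH] f [|c] //.
  rewrite !mkseqS' /= andbF; congr cons.
  case: m {IH} => [|m] //; rewrite !mkseqS' /= andbF; congr cons.
  by apply: eq_mkseq => j /=; rewrite andbT.
rewrite !mkseqS' /= andbT; congr cons.
by rewrite -IH; apply: eq_mkseq => j /=.
Qed.

Lemma mask_clrh f m : mkseq (fun j => f j && ~~ (j == 0)) m = clrh (mkseq f m).
Proof.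
case: m => [|m] //; rewrite !mkseqS' /= andbF; congr cons.
by apply: eq_mkseq => j /=; rewrite andbT.
Qed.

Section PathGame.
Variables (n m : nat).
Hypothesis Hnm : n = m + m.

Local Notation e := (path_rel n).

Definition ub (D : {set 'I_n}) (i : nat) : bool :=
  [exists y : 'I_n, (val y == i) && (y \notin D)].

Lemma ub_val D (y : 'I_n) : ub D y = (y \notin D).
Proof.
apply/existsP/idP => [[z /andP[/eqP/val_inj -> //]]|H].
by exists y; rewrite eqxx.
Qed.

Lemma ub_ge D i : n <= i -> ub D i = false.
Proof.
move=> H; apply/existsP => [[[z Hz'] /andP[/eqP /= Hz _]]].
lia.
Qed.

Lemma ub_move D (x : 'I_n) i :
  ub (D :|: nbhd e x) i = ub D i && ~~ ((x.+1 == i) || (i.+1 == x)).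
Proof.
case: (ltnP i n) => Hi; last by rewrite !ub_ge.
have -> : i = val (Ordinal Hi) by [].
by rewrite !ub_val in_setU /nbhd in_set negb_or.
Qed.

Definition Es D := mkseq (fun j => ub D (2 * j)) m.
Definition Os D := mkseq (fun j => ub D (2 * j + 1)) m.
Definition u D := count id (Es D) + count id (Os D).
Definition W D := F (Es D) + F (Os D).

Local Notation mv D x := (D :|: nbhd e x).

Lemma move_odd D (x : 'I_n) c : x = 2 * c + 1 :> nat ->
  Es (mv D x) = clr (Es D) c /\ Os (mv D x) = Os D.
Proof.
move=> Hx; rewrite /Es /Os -mask_clr; split; apply: eq_mkseq => j; rewrite ub_move Hx.
  by congr andb; congr negb; lia.
have -> : (2 * c + 1).+1 == 2 * j + 1 = false by lia.
have -> : (2 * j + 1).+1 == 2 * c + 1 = false by lia.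
by rewrite andbT.
Qed.

Lemma move_zero D (x : 'I_n) : x = 0 :> nat ->
  Es (mv D x) = Es D /\ Os (mv D x) = clrh (Os D).
Proof.
move=> Hx; rewrite /Es /Os -mask_clrh; split; apply: eq_mkseq => j; rewrite ub_move Hx.
  have -> : 1 == 2 * j = false by lia.
  have -> : (2 * j).+1 == 0 = false by lia.
  by rewrite andbT.
by congr andb; congr negb; lia.
Qed.

Lemma move_even D (x : 'I_n) c : x = 2 * c + 2 :> nat ->
  Es (mv D x) = Es D /\ Os (mv D x) = clr (Os D) c.
Proof.
move=> Hx; rewrite /Es /Os -mask_clr; split; apply: eq_mkseq => j; rewrite ub_move Hx.
  have -> : (2 * c + 2).+1 == 2 * j = false by lia.
  have -> : (2 * j).+1 == 2 * c + 2 = false by lia.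
  by rewrite andbT.
by congr andb; congr negb; lia.
Qed.

Lemma move_cases (x : 'I_n) :
  (exists c, x = 2 * c + 1 :> nat) \/ x = 0 :> nat \/ (exists c, x = 2 * c + 2 :> nat).
Proof.
case: (boolP (x %% 2 == 1)) => Ho.
  left; exists (x %/ 2); move: Ho; lia.
right; case Hx: (nat_of_ord x == 0); first by left; apply/eqP.
right; exists ((x %/ 2).-1); move: Ho Hx; lia.
Qed.

Lemma nth_Es D j : j < m -> nth false (Es D) j = ub D (2 * j).
Proof. by move=> Hj; rewrite /Es nth_mkseq. Qed.
Lemma nth_Os D j : j < m -> nth false (Os D) j = ub D (2 * j + 1).
Proof. by move=> Hj; rewrite /Os nth_mkseq. Qed.

Lemma legal_u D (x : 'I_n) : legal_move e D x -> u (mv D x) < u D.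
Proof.
move=> /subsetPn [y]; rewrite /nbhd in_set /path_rel => Hxy Hy.
rewrite -ub_val in Hy.
have Hyn := ltn_ord y.
rewrite /u.
have [[c Hc]|[H0|[c Hc]]] := move_cases x.
- have [-> ->] := move_odd D Hc.
  have := count_clr (Es D) c.
  case/orP: Hxy => /eqP Hxy.
    have Hj : c.+1 < m by lia.
    rewrite (nth_Es D Hj).
    have -> : 2 * c.+1 = y by lia.
    rewrite Hy; lia.
  have Hj : c < m by lia.
  rewrite (nth_Es D Hj).
  have -> : 2 * c = y by lia.
  rewrite Hy; lia.
- have [-> ->] := move_zero D H0.
  have := count_clrh (Os D).
  case/orP: Hxy => /eqP Hxy; last by lia.
  have Hj : 0 < m by lia.
  rewrite (nth_Os D Hj).
  have -> : 2 * 0 + 1 = y by lia.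
  rewrite Hy; lia.
- have [-> ->] := move_even D Hc.
  have := count_clr (Os D) c.
  case/orP: Hxy => /eqP Hxy.
    have Hj : c.+1 < m by lia.
    rewrite (nth_Os D Hj).
    have -> : 2 * c.+1 + 1 = y by lia.
    rewrite Hy; lia.
  have Hj : c < m by lia.
  rewrite (nth_Os D Hj).
  have -> : 2 * c + 1 = y by lia.
  rewrite Hy; lia.
Qed.

Lemma not_legal_u D (x : 'I_n) : ~~ legal_move e D x -> u (mv D x) = u D.
Proof. by rewrite /legal_move negbK => /setUidPl ->. Qed.

Lemma u_drop2 D (x : 'I_n) : u D <= u (mv D x) + 2.
Proof.
rewrite /u.
have [[c Hc]|[H0|[c Hc]]] := move_cases x.
- have [-> ->] := move_odd D Hc; have := count_clr (Es D) c; lia.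
- have [-> ->] := move_zero D H0; have := count_clrh (Os D); lia.
- have [-> ->] := move_even D Hc; have := count_clr (Os D) c; lia.
Qed.

Lemma W_le_u D : W D <= u D.
Proof. rewrite /W /u /F; have := G_le (Es D) 0; have := G_le (Os D) 0; lia. Qed.

Lemma u_le_n D : u D <= n.
Proof.
rewrite /u; have := count_size id (Es D); have := count_size id (Os D).
rewrite /Es /Os !size_mkseq; lia.
Qed.

Lemma sta_move D (x : 'I_n) : legal_move e D x ->
  W D + 1 + 2 * u (mv D x) <= W (mv D x) + 2 * u D.
Proof.
move=> Hl; have := legal_u Hl; rewrite /W /u /F.
have [[c Hc]|[H0|[c Hc]]] := move_cases x.
- have [-> ->] := move_odd D Hc => H.
  have := @S1 (Es D) c 0; lia.
- have [-> ->] := move_zero D H0 => H.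
  have := @S2 (Os D); lia.
- have [-> ->] := move_even D Hc => H.
  have := @S1 (Os D) c 0; lia.
Qed.

Lemma dom_move D : [exists x, legal_move e D x] ->
  exists x, legal_move e D x /\
    W D + W D %% 2 + 2 + 2 * u (mv D x) <= W (mv D x) + 2 * u D.
Proof.
move=> /existsP [x0 Hx0].
case HW: (W D == 0).
  exists x0; split => //; have := legal_u Hx0; move/eqP: HW; lia.
case HE: ((F (Es D) %% 2 == 1) || ((F (Os D) %% 2 == 0) && (0 < F (Es D)))).
  have HF : 0 < F (Es D) by lia.
  have [c [Hc1 Hc2 Hc3 Hc4]] := DomL HF.
  rewrite /Es size_mkseq in Hc1.
  have Hx : 2 * c + 1 < n by lia.
  pose x := Ordinal Hx.
  have [HE' HO'] := move_odd D (x := x) (c := c) erefl.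
  have Hu : u (mv D x) + 2 = u D.
    rewrite /u HE' HO'; have := count_clr (Es D) c; rewrite Hc2 Hc3; lia.
  have Hl : legal_move e D x.
    apply: contraT => Hn; have := not_legal_u Hn; lia.
  exists x; split => //.
  rewrite /W HE' HO'; move: HW HE Hu Hc4; rewrite /W; lia.
have HF : 0 < F (Os D) by move: HW HE; rewrite /W; lia.
have [c [Hc1 Hc2 Hc3 Hc4]] := DomL HF.
rewrite /Os size_mkseq in Hc1.
have Hx : 2 * c + 2 < n by lia.
pose x := Ordinal Hx.
have [HE' HO'] := move_even D (x := x) (c := c) erefl.
have Hu : u (mv D x) + 2 = u D.
  rewrite /u HE' HO'; have := count_clr (Os D) c; rewrite Hc2 Hc3; lia.
have Hl : legal_move e D x.
  apply: contraT => Hn; have := not_legal_u Hn; lia.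
exists x; split => //.
rewrite /W HE' HO'; move: HW HE Hu Hc4; rewrite /W; lia.
Qed.

Lemma single_move D : 0 < u D -> exists x, u (mv D x) + 1 = u D.
Proof.
rewrite /u => Hu.
case HE: (0 < count id (Es D)).
  have [c [Hc1 Hc2]] := SE HE.
  rewrite /Es size_mkseq in Hc1.
  have Hx : 2 * c + 1 < n by lia.
  exists (Ordinal Hx).
  have [-> ->] := move_odd D (x := Ordinal Hx) (c := c) erefl; lia.
have HO : 0 < count id (Os D) by lia.
have Hm : 0 < m.
  have := count_size id (Os D); have : size (Os D) = m by rewrite size_mkseq. lia.
have [H1|[c [Hc1 Hc2]]] := SO HO.
  have Hx : 0 < n by lia.
  exists (Ordinal Hx).
  have [-> ->] := move_zero D (x := Ordinal Hx) erefl; lia.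
rewrite /Os size_mkseq in Hc1.
have Hx : 2 * c + 2 < n by lia.
exists (Ordinal Hx).
have [-> ->] := move_even D (x := Ordinal Hx) (c := c) erefl; lia.
Qed.

End PathGame.

Ltac ulia := try (unfold reverse_coercion in * ); lia.

Lemma bigmin_le (I : finType) (P : pred I) (F : I -> nat) z x :
  P x -> \big[minn/z]_(i | P i) F i <= F x.
Proof.
move=> Px; have : x \in index_enum I by rewrite mem_index_enum.
elim: (index_enum I) => [|a r IH] //; rewrite inE big_cons => /orP [/eqP <-|Hr].
  by rewrite Px geq_minl.
case: (P a); last exact: IH.
by rewrite geq_min IH ?orbT.
Qed.

Lemma min_step (I : finType) (P : pred I) (F : I -> nat) z x c d :
  P x -> (F x).+1 + c <= d -> (\big[minn/z]_(i | P i) F i).+1 + c <= d.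
Proof. move=> Px H; apply: (@leq_trans _ _ _ _ H); rewrite leq_add2r ltnS; exact: bigmin_le. Qed.

Lemma max_step (I : finType) (P : pred I) (F : I -> nat) x0 c d :
  P x0 -> (forall i, P i -> (F i).+1 + c <= d) -> (\max_(i | P i) F i).+1 + c <= d.
Proof.
move=> P0 H.
have H1 : \max_(i | P i) F i <= d - 1 - c by apply/bigmax_leqP => i Pi; have := H i Pi; ulia.
have := H x0 P0; ulia.
Qed.

Lemma min_lb (I : finType) (P : pred I) (F : I -> nat) z B c d :
  B <= z -> (forall i, P i -> B <= F i) -> d <= B.+1 + c ->
  d <= (\big[minn/z]_(i | P i) F i).+1 + c.
Proof.
move=> Hz HF Hd; apply: (@leq_trans _ _ _ Hd); rewrite leq_add2r ltnS.
apply: (big_ind (fun v => B <= v)) => //.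
by move=> a b Ha Hb; rewrite leq_min Ha Hb.
Qed.

Lemma max_lb (I : finType) (P : pred I) (F : I -> nat) x c d :
  P x -> d <= (F x).+1 + c -> d <= (\max_(i | P i) F i).+1 + c.
Proof. move=> Px Hd; apply: (@leq_trans _ _ _ Hd); rewrite leq_add2r ltnS; exact: leq_bigmax_cond. Qed.

Section Main.
Variables (n m : nat).
Hypothesis Hnm : n = m + m.
Local Notation e := (path_rel n).
Local Notation mv D x := (D :|: nbhd e x).

Lemma UB k : forall D : {set 'I_n},
  tg_value e k D true + (W m D + 1) %/ 2 <= u m D /\
  tg_value e k D false + W m D %/ 2 <= u m D.
Proof.
elim: k => [|k IH] D /=.
  by have := W_le_u Hnm D; ulia.
case: ifP => Hex; last by have := W_le_u Hnm D; ulia.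
split.
  have [x [Hl Hb]] := dom_move Hnm Hex.
  have [IH1 IH2] := IH (mv D x).
  apply: (min_step _ Hl).
  change ((tg_value e k (mv D x) false).+1 + (W m D + 1) %/ 2 <= u m D).
  ulia.
have [x0 Hx0] := existsP Hex.
apply: (max_step Hx0) => y Hy.
change ((tg_value e k (mv D y) true).+1 + W m D %/ 2 <= u m D).
have [IH1 _] := IH (mv D y); have := sta_move Hnm Hy; have := legal_u Hnm Hy.
have := W_le_u Hnm (mv D y); ulia.
Qed.

Lemma LB k : forall D : {set 'I_n}, u m D <= k ->
  u m D <= tg_value e k D true + (u m D + 1) %/ 3 /\
  u m D <= tg_value e k D false + u m D %/ 3.
Proof.
elim: k => [|k IH] D Hk /=; first ulia.
case Hu0: (u m D == 0); first by move/eqP: Hu0 => ->; ulia.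
have [x Hx] := single_move Hnm (D := D) (ltac:(ulia)).
have Hlx : legal_move e D x.
  by apply: contraT => Hn; have := not_legal_u m Hn; ulia.
have Hex : [exists y, legal_move e D y] by apply/existsP; exists x.
rewrite Hex; split.
  apply: (min_lb (B := u m D - (u m D + 1) %/ 3 - 1)).
  - rewrite card_ord; have := u_le_n Hnm D; ulia.
  - move=> y Hy; have Hlt := legal_u Hnm Hy; have H2 := u_drop2 Hnm D y.
    change (u m D - (u m D + 1) %/ 3 - 1 <= tg_value e k (mv D y) false).
    have [_ IH2] := IH (mv D y) (ltac:(ulia)); ulia.
  - ulia.
apply: (max_lb Hlx).
change (u m D <= (tg_value e k (mv D x) true).+1 + u m D %/ 3).
have [IH1 _] := IH (mv D x) (ltac:(ulia)); ulia.
Qed.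

End Main.

Lemma count_nseq_true b : count id (nseq b true) = b.
Proof. by rewrite count_nseq mul1n. Qed.

Lemma F_nseq b : G (nseq b true) 0 = w b.
Proof. by rewrite -[nseq b true]cats0 G_nseq. Qed.

Lemma mk_true m : mkseq (fun _ => true) m = nseq m true.
Proof. by elim: m => [|m IH] //; rewrite mkseqS' IH. Qed.

Lemma mk_neq a m : a < m -> mkseq (fun j => j != a) m = nseq a true ++ false :: nseq (m - a - 1) true.
Proof.
elim: a m => [|a IH] [|m] //= H.
  rewrite mkseqS' /=; have -> : m.+1 - 0 - 1 = m by ulia.
  by rewrite -mk_true; congr cons; apply: eq_mkseq.
rewrite mkseqS' /=; have -> : m.+1 - a.+1 - 1 = m - a - 1 by ulia.
rewrite -IH; last by ulia.
by congr cons; apply: eq_mkseq.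
Qed.

Lemma F_hole a b : F (nseq a true ++ false :: nseq b true) = w a + w b.
Proof. by rewrite /F G_nseq /= F_nseq. Qed.

Lemma count_hole a b : count id (nseq a true ++ false :: nseq b true) = a + b.
Proof. by rewrite count_cat /= !count_nseq_true. Qed.

Unset Implicit Arguments.

Theorem lemma3p6 (n : nat) (v : 'I_n) :
  4 <= n -> n %% 6 = 4 ->
  gamma_tg_at (path_rel n) v <= gamma_tg (path_rel n) - 1.
Proof.
move=> H4 H6.
set m := 3 * (n %/ 6) + 2.
have Hnm : n = m + m by rewrite /m; ulia.
have Hlow : n <= gamma_tg (path_rel n) + (n + 1) %/ 3.
  have Hu0 : u m (set0 : {set 'I_n}) = n.
    have HE : Es m (set0 : {set 'I_n}) = nseq m true.
      rewrite -mk_true; apply: eq_in_mkseq => j Hj.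
      have Hi : 2 * j < n by ulia.
      by rewrite (ub_val _ (Ordinal Hi)) in_set0.
    have HO : Os m (set0 : {set 'I_n}) = nseq m true.
      rewrite -mk_true; apply: eq_in_mkseq => j Hj.
      have Hi : 2 * j + 1 < n by ulia.
      by rewrite (ub_val _ (Ordinal Hi)) in_set0.
    by rewrite /u HE HO !count_nseq_true.
  have Hk0 : u m (set0 : {set 'I_n}) <= #|'I_n| by rewrite card_ord Hu0.
  have [H1 _] := LB Hnm Hk0.
  by rewrite Hu0 in H1; exact: H1.
have H1 : gamma_tg_at (path_rel n) v + (W m [set v] + 1) %/ 2 <= u m [set v].
  by have [H _] := UB Hnm #|'I_n| [set v]; exact: H.
have Hv := ltn_ord v.
have Hub : forall i, i < n -> ub [set v] i = (i != v).
  move=> i Hi; by rewrite (ub_val _ (Ordinal Hi)) in_set1.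
case: (boolP (v %% 2 == 0)) => Hp.
  set a := v %/ 2.
  have Ha : a < m by rewrite /a; ulia.
  have HE : Es m [set v] = nseq a true ++ false :: nseq (m - a - 1) true.
    rewrite -mk_neq //; apply: eq_in_mkseq => j Hj; rewrite Hub; last by ulia.
    rewrite /a; ulia.
  have HO : Os m [set v] = nseq m true.
    rewrite -mk_true; apply: eq_in_mkseq => j Hj; rewrite Hub; last by ulia.
    ulia.
  move: H1; rewrite /u /W HE HO count_hole F_hole count_nseq_true /F F_nseq.
  move: Hlow; rewrite /m /a; ulia.
set a := v %/ 2.
have Ha : a < m by rewrite /a; ulia.
have HO : Os m [set v] = nseq a true ++ false :: nseq (m - a - 1) true.
  rewrite -mk_neq //; apply: eq_in_mkseq => j Hj; rewrite Hub; last by ulia.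
  rewrite /a; ulia.
have HE : Es m [set v] = nseq m true.
  rewrite -mk_true; apply: eq_in_mkseq => j Hj; rewrite Hub; last by ulia.
  ulia.
move: H1; rewrite /u /W HE HO count_hole F_hole count_nseq_true /F F_nseq.
move: Hlow; rewrite /m /a; ulia.
Qed.
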